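(* Let $N\ge2$, and for $\bar x,\alpha\in\mathbb{R}$, $t\ge0$ define $$\Psi_L(\bar x,\alpha,t):=\alpha+\exp\!\left(-\tfrac{N-1}{N}t\right)(\bar x-\alpha).$$ Let $x(t)=(x_1(t),\dots,x_N(t))$, $x_i(t)\in\mathbb{R}$, be a (Carathéodory) solution of $$\dot x_i(t)=\frac1N\sum_{j=1}^N M_{ij}(t)(x_j-x_i),\qquad i=1,\dots,N,$$ with Lebesgue measurable $M_{ij}:[0,+\infty)\to[0,1]$, such that $x_i(0)\ge\alpha$ for all $i$, and let $\bar x\ge\alpha$. Let $T>0$. If there exist an index $I$ and a time $\tau\in[0,T]$ with $x_I(\tau)\ge\Psi_L(\bar x,\alpha,\tau)$, then $x_I(t)\ge\Psi_L(\bar x,\alpha,t)$ for all $t\ge\tau$. *)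

(* Defs.v *)
From HB Require Import structures.
From mathcomp Require Import all_boot all_order all_algebra.
From mathcomp Require Import all_classical all_reals all_analysis.
Set Implicit Arguments. Unset Strict Implicit. Unset Printing Implicit Defensive.
Import Order.TTheory GRing.Theory Num.Theory.
Import numFieldNormedType.Exports.
Local Open Scope classical_set_scope.
Local Open Scope ring_scope.

Definition PsiL {R : realType} (N : nat) (xbar alpha t : R) : R :=
  alpha + expR (- ((N%:R - 1) / N%:R * t)) * (xbar - alpha).

Definition consensus_rhs {R : realType} (N : nat)
  (M : 'I_N -> 'I_N -> R -> R) (x : 'I_N -> R -> R) (i : 'I_N) (s : R) : R :=
  N%:R^-1 * \sum_(j < N) M i j s * (x j s - x i s).

(* Lebesgue measurability: measurability w.r.t. the completed Lebesgue
   sigma-algebra on the domain (Borel sigma-algebra on the codomain R). *)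
Definition measurable_fun_wrt {d} {T : measurableType d} {S} {R : realType}
  (mu : set T -> S) (D : set T) (f : T -> R) : Prop := measurable_fun D f.
Definition lebesgue_measurable_fun {R : realType} (D : set R) (f : R -> R) : Prop :=
  measurable_fun_wrt (@completed_lebesgue_measure R) D f.

(* Caratheodory solution on [0, +oo): for every t >= 0 the right-hand side is
   Lebesgue integrable on [0,t] and x_i(t) = x_i(0) + int_0^t rhs_i(s) ds
   (equivalently, x_i is locally absolutely continuous with x_i' = rhs_i a.e.). *)
Definition caratheodory_solution {R : realType} (N : nat)
  (M : 'I_N -> 'I_N -> R -> R) (x : 'I_N -> R -> R) : Prop :=
  forall (i : 'I_N) (t : R), 0 <= t ->
    (@completed_lebesgue_measure R).-integrable `[0, t] (EFin \o consensus_rhs M x i) /\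
    x i t = x i 0 + Rintegral (@completed_lebesgue_measure R) `[0, t] (consensus_rhs M x i).

(* Main.v *)
Require Import Defs.
From HB Require Import structures.
From mathcomp Require Import all_boot all_order all_algebra.
From mathcomp Require Import all_classical all_reals all_analysis.
From mathcomp Require Import ring lra.
Import Order.TTheory GRing.Theory Num.Theory.
Import numFieldNormedType.Exports.
Local Open Scope classical_set_scope.
Local Open Scope ring_scope.
Section S.
Context {R : realType}.
Lemma real_ind (a : R) (P : R -> Prop) :
  P a ->
  (forall t, a <= t -> P t -> exists2 d, 0 < d & forall u, t <= u <= t + d -> P u) ->
  (forall t, a < t -> (forall u, a <= u < t -> P u) -> P t) ->
  forall t, a <= t -> P t.
Proof.
move=> Pa Hopen Hclosed t0 at0; apply: contrapT => nP.
pose S := [set u | a <= u /\ forall v, a <= v <= u -> P v].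
have S0 : S a.
  split=> // v /andP[h1 h2].
  by have -> : v = a by apply/eqP; rewrite eq_le h1 h2.
have ub : ubound S t0.
  move=> u [au Hu]; rewrite leNgt; apply/negP => t0u; apply: nP; apply: Hu.
  by rewrite at0 ltW.
have hs : has_sup S by split; [exists a | exists t0].
have as_ : a <= sup S := sup_upper_bound hs S0.
have Pbelow : forall v, a <= v < sup S -> P v.
  move=> v /andP[av vs]; have [w [aw Hw] vw] := sup_gt (ex_intro _ a S0) vs.
  by apply: Hw; rewrite av ltW.
have Ps : P (sup S).
  case: (eqVneq a (sup S)) => [<- //|nas].
  apply: Hclosed => //; by rewrite lt_neqAle nas as_.
have [d d0 Hd] := Hopen _ as_ Ps.
have : S (sup S + d).
  split; first lra.
  move=> v /andP[av vsd]; case: (ltP v (sup S)) => vs.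
    by apply: Pbelow; rewrite av vs.
  by apply: Hd; rewrite vs vsd.
move/(sup_upper_bound hs) => h; lra.
Qed.

Lemma fin_pos_min (N : nat) (f : 'I_N -> R) : (forall j, 0 < f j) ->
  exists2 g, 0 < g & forall j, g <= f j.
Proof.
move=> fp; exists (1 + \sum_j (f j)^-1)^-1.
  rewrite invr_gt0; apply: (lt_le_trans ltr01); rewrite lerDl; apply: sumr_ge0 => j _.
  by rewrite invr_ge0 ltW.
move=> j; have fj := fp j.
have h : (f j)^-1 <= \sum_j (f j)^-1.
  rewrite (bigD1 j) //= lerDl; apply: sumr_ge0 => k _; by rewrite invr_ge0 ltW.
have fi : 0 < (f j)^-1 by rewrite invr_gt0.
have sp : 0 < 1 + \sum_j (f j)^-1 by lra.
rewrite -[f j]invrK lef_pV2 ?posrE ?invr_gt0 //; lra.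
Qed.

Lemma Mlem (m d e : R) : 0 <= m <= 1 -> 0 <= e -> - e <= d -> - e <= m * d.
Proof.
move=> /andP[m0 m1] e0 de; case: (lerP 0 d) => d0.
  have : 0 <= m * d by rewrite mulr_ge0. lra.
have : 0 <= (1 - m) * (- d) by rewrite mulr_ge0 //; lra.
lra.
Qed.
Notation mu := (@completed_lebesgue_measure R).
Notation CT := (caratheodory_type (wlength (R:=R) idfun)^*%mu).
Lemma mi (i : interval R) : measurable ([set` i] : set CT).
Proof. apply: sub_caratheodory. have := @measurable_itv R i. exact. Qed.
Lemma mui (s t : R) : s <= t -> mu (`]s, t] : set CT) = (t - s)%:E.
Proof. move=> st. have := @lebesgue_measure_itv R `]s, t]. rewrite /lebesgue_measure /=.
rewrite /completed_lebesgue_measure /completed_lebesgue_stieltjes_measure /=.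
rewrite /completed_measure_extension /lebesgue_stieltjes_measure /measure_extension /=.
move=> ->. rewrite lte_fin; case: ltP => // ts.
have -> : t = s by apply/eqP; rewrite eq_le st ts.
by rewrite subrr.
Qed.
Lemma fmu (s t : R) : s <= t -> fine (mu (`]s, t] : set CT)) = t - s.
Proof. by move=> st; rewrite mui. Qed.

Lemma cst_int (s t K : R) : s <= t -> mu.-integrable (`]s, t] : set CT) (EFin \o (fun _ => K)).
Proof.
move=> st; apply: measurable_bounded_integrable; first exact: mi.
- by change (mu (`]s, t] : set CT) < +oo)%E; rewrite mui // ltry.
- exact: measurable_cst.
- exact: bounded_cst.
Qed.

Lemma int_lb (g : R -> R) s t K : s <= t ->
  mu.-integrable (`]s, t] : set CT) (EFin \o g) ->
  (forall u, s < u <= t -> K <= g u) ->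
  K * (t - s) <= \int[mu]_(u in (`]s, t] : set CT)) g u.
Proof.
move=> st ig hK; rewrite -fmu // -Rintegral_cst; last exact: mi.
apply: le_Rintegral; [exact: mi|exact: cst_int|exact: ig|].
by move=> u; rewrite /= in_itv /=; exact: hK.
Qed.

Lemma int_ub (g : R -> R) s t K : s <= t ->
  mu.-integrable (`]s, t] : set CT) (EFin \o g) ->
  (forall u, s < u <= t -> g u <= K) ->
  \int[mu]_(u in (`]s, t] : set CT)) g u <= K * (t - s).
Proof.
move=> st ig hK; rewrite -fmu // -Rintegral_cst; last exact: mi.
apply: le_Rintegral; [exact: mi|exact: ig|exact: cst_int|].
by move=> u; rewrite /= in_itv /=; exact: hK.
Qed.

Lemma split_int (g : R -> R) s t : 0 <= s <= t ->
  mu.-integrable (`[0, t] : set CT) (EFin \o g) ->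
  \int[mu]_(u in (`[0, t] : set CT)) g u =
  \int[mu]_(u in (`[0, s] : set CT)) g u + \int[mu]_(u in (`]s, t] : set CT)) g u.
Proof.
move=> /andP[s0 st] ig.
have E : (`[0, t]%classic : set CT) = (`[0, s]%classic : set CT) `|` (`]s, t]%classic : set CT).
  apply/seteqP; split => u /=; rewrite !in_itv /=.
    move=> /andP[u0 ut]; case: (lerP u s) => us; [left|right]; apply/andP; split => //.
  by case=> /andP[h1 h2]; apply/andP; split => //; lra.
rewrite E Rintegral_setU //; try exact: mi.
  by rewrite -E.
apply/disj_setPS => u /= [] /andP[_ us]; rewrite in_itv /= => /andP[su _].
by move: us; rewrite bnd_simp => us; move: su; rewrite ltNge us.
Qed.

Section Psi.
Variables (N : nat) (hN : (2 <= N)%N) (xbar alpha : R) (hxbar : alpha <= xbar).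
Let c := (N%:R - 1) / N%:R : R.
Lemma c_ge0 : 0 <= c.
Proof.
have : 2%:R <= N%:R :> R by rewrite ler_nat.
move=> h; rewrite /c divr_ge0 //.
  by rewrite subr_ge0 (le_trans _ h) // ler1n.
Qed.
Lemma Psi_dec s t : s <= t -> PsiL N xbar alpha t <= PsiL N xbar alpha s.
Proof.
move=> st; rewrite /PsiL lerD2l ler_wpM2r ?subr_ge0 // ler_expR lerN2.
by rewrite ler_wpM2l // c_ge0.
Qed.
Lemma Psi_key s t : s <= t ->
  (1 + c * (t - s)) * (PsiL N xbar alpha t - alpha) <= PsiL N xbar alpha s - alpha.
Proof.
move=> st; have E X : alpha + X - alpha = X by rewrite addrAC addrN add0r.
rewrite /PsiL !E -/c mulrA ler_wpM2r ?subr_ge0 //.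
have -> : - (c * s) = c * (t - s) + - (c * t) by ring.
rewrite expRD ler_wpM2r ?expR_ge0 //; exact: expR_ge1Dx.
Qed.
End Psi.

Section Sys.
Variables (N : nat) (hN : (2 <= N)%N) (M : 'I_N -> 'I_N -> R -> R) (x : 'I_N -> R -> R).
Hypothesis hMrange : forall (i j : 'I_N) (t : R), 0 <= t -> 0 <= M i j t <= 1.
Hypothesis hsol : caratheodory_solution M x.
Notation F := (consensus_rhs M x).

Lemma Ldiff i s t : 0 <= s <= t ->
  mu.-integrable (`]s, t] : set CT) (EFin \o F i) /\
  x i t - x i s = \int[mu]_(u in (`]s, t] : set CT)) F i u.
Proof.
move=> /andP[s0 st].
have t0 : 0 <= t by apply: le_trans st.
have [it rt] := hsol i t t0; have [_ rs] := hsol i s s0.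
split.
  apply: integrableS it; [exact: mi|exact: mi|].
  by move=> u /=; rewrite !in_itv /= => /andP[su ->]; rewrite andbT (le_trans s0) // ltW.
rewrite rt rs (@split_int _ s) ?s0 ?st //; lra.
Qed.

Lemma bnd T' : 0 <= T' -> exists B, 0 <= B /\ forall j u, 0 <= u <= T' -> `|x j u| <= B.
Proof.
move=> T0.
pose Bj j := `|x j 0| + \int[mu]_(u in (`[0, T'] : set CT)) `|F j u|.
have Bj0 j : 0 <= Bj j.
  by rewrite /Bj addr_ge0 // Rintegral_ge0.
exists (\sum_j Bj j); split; first by apply: sumr_ge0.
move=> j u /andP[u0 uT].
have [iu ru] := hsol j u u0.
have [iT _] := hsol j T' T0.
have h1 : `|x j u| <= Bj j.
  rewrite ru /Bj; apply: (le_trans (ler_normD _ _)); rewrite lerD2l.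
  apply: (le_trans (le_normr_Rintegral _ _)); [exact: mi|exact: iu|].
  rewrite (@split_int _ u) ?u0 ?uT //; last exact: integrable_norm.
  rewrite lerDl; exact: Rintegral_ge0.
apply: (le_trans h1); rewrite (bigD1 j) //= lerDl; exact: sumr_ge0.
Qed.

Lemma Npos : (0 < N)%N.
Proof. by apply: leq_trans hN. Qed.

Lemma Fbound B i u : 0 <= u -> (forall j, `|x j u| <= B) -> `|F i u| <= 2 * B.
Proof.
move=> u0 hB; rewrite /consensus_rhs normrM.
have Np : 0 < N%:R :> R by rewrite ltr0n Npos.
rewrite ger0_norm; last by rewrite invr_ge0 ltW.
rewrite ler_pdivrMl //.
apply: (le_trans (ler_norm_sum _ _ _)).
have -> : N%:R * (2 * B) = \sum_(j < N) (2 * B).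
  by rewrite sumr_const card_ord mulr_natl.
apply: ler_sum => j _; rewrite normrM.
have /andP[m0 m1] := hMrange i j u u0.
rewrite (ger0_norm m0).
have hd : `|x j u - x i u| <= 2 * B.
  apply: (le_trans (ler_normB _ _)); have := hB j; have := hB i; lra.
have := normr_ge0 (x j u - x i u).
nra.
Qed.

Lemma Lip T' : 0 <= T' -> exists L, 0 <= L /\ forall i s t, 0 <= s -> s <= t -> t <= T' ->
  x i t <= x i s + L * (t - s) /\ x i s - L * (t - s) <= x i t.
Proof.
move=> T0; have [B [B0 hB]] := @bnd T' T0.
exists (2 * B); split; first lra.
move=> i s t s0 st tT.
have [it rt] := @Ldiff i s t ltac:(by rewrite s0 st).
have hF : forall u, s < u <= t -> `|F i u| <= 2 * B.
  move=> u /andP[su ut]; apply: Fbound; first by apply: le_trans (ltW su).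
  move=> j; apply: hB; rewrite (le_trans s0 (ltW su)) /=; exact: le_trans tT.
have lb := @int_lb (F i) s t (- (2 * B)) st it ltac:(by move=> u /hF; rewrite ler_norml => /andP[]).
have ub := @int_ub (F i) s t (2 * B) st it ltac:(by move=> u /hF; rewrite ler_norml => /andP[]).
split; lra.
Qed.

Lemma F_lb i u K : 0 <= u -> 0 <= K -> (forall k, - K <= x k u - x i u) -> - K <= F i u.
Proof.
move=> u0 K0 hk; rewrite /consensus_rhs.
have Np : 0 < N%:R :> R by rewrite ltr0n Npos.
rewrite ler_pdivlMl //.
have -> : N%:R * - K = \sum_(k < N) (- K).
  by rewrite sumr_const card_ord mulr_natl.
apply: ler_sum => k _; apply: Mlem => //; exact: hMrange.
Qed.

Lemma partA alpha : (forall i, alpha <= x i 0) -> forall j t, 0 <= t -> alpha <= x j t.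
Proof.
move=> hx0.
suff H : forall e, 0 < e -> forall t, 0 <= t -> forall j, alpha - e * (1 + t) < x j t.
  move=> j t t0; rewrite leNgt; apply/negP => xa.
  have t1 : 0 < 1 + t by lra.
  have e0 : 0 < (alpha - x j t) / (1 + t) by rewrite divr_gt0 //; lra.
  have := H _ e0 t t0 j; rewrite divfK ?lt0r_neq0 //; lra.
move=> e e0.
apply: (@real_ind 0 (fun t => forall j, alpha - e * (1 + t) < x j t)).
- by move=> j; have := hx0 j; lra.
- move=> t t0 Pt.
  have [L [L0 hL]] := @Lip (t + 1) ltac:(lra).
  have [g g0 hg] := @fin_pos_min N (fun j => x j t - (alpha - e * (1 + t)))
    ltac:(by move=> j; have := Pt j; lra).
  pose d := Num.min 1 (g / (2 * (L + 1))).
  have d1 : d <= 1 by rewrite ge_min lexx.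
  have d2 : d <= g / (2 * (L + 1)) by rewrite ge_min lexx orbT.
  have d0 : 0 < d by rewrite lt_min ltr01 divr_gt0 //; lra.
  exists d => // u /andP[tu ud] j.
  have [h _] := hL j t u t0 tu ltac:(lra).
  have [_ h2] := hL j t u t0 tu ltac:(lra).
  have hgj := hg j; simpl in hgj.
  have k1 : (u - t) * (2 * (L + 1)) <= g.
    by rewrite -ler_pdivlMr; [lra|lra].
  have : L * (u - t) <= g / 2 by nra.
  have : 0 <= e * (u - t) by rewrite mulr_ge0 //; lra.
  lra.
- move=> t t0 Pb j; rewrite ltNge; apply/negP => hj.
  have [L [L0 hL]] := @Lip t ltac:(lra).
  pose h := e / (2 * (L + 1)).
  have h0 : 0 < h by rewrite divr_gt0 //; lra.
  have hh : h * (2 * (L + 1)) = e by rewrite divfK // lt0r_neq0 //; lra.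
  pose s := Num.max 0 (t - h).
  have s0 : 0 <= s by rewrite le_max lexx.
  have st : s < t by rewrite gt_max t0 /=; lra.
  have ts : t - h <= s by rewrite le_max lexx orbT.
  have Ps := Pb s ltac:(by rewrite s0 st).
  have [it rt] := @Ldiff j s t ltac:(by rewrite s0 ltW).
  have lb := @int_lb (F j) s t (- (2 * L * (t - s))) (ltW st) it.
  have hlb : forall u, s < u <= t -> - (2 * L * (t - s)) <= F j u.
    move=> u /andP[su ut]; apply: F_lb.
    - by apply: le_trans (ltW su).
    - by rewrite !mulr_ge0 //; lra.
    move=> k.
    have [_ h1] := hL k s u s0 (ltW su) ut.
    have [_ h2] := hL j u t (le_trans s0 (ltW su)) ut (lexx t).
    have := Ps k.
    have : 0 <= e * (t - s) by rewrite mulr_ge0 //; lra.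
    have : L * (u - s) <= L * (t - s) by rewrite ler_wpM2l //; lra.
    have : L * (t - u) <= L * (t - s) by rewrite ler_wpM2l //; lra.
    lra.
  have := lb hlb; rewrite -rt => lb2.
  have := Ps j => psj.
  have kp : 0 < t - s by lra.
  have k2 : (t - s) * (2 * (L + 1)) <= e by rewrite -hh ler_wpM2r //; lra.
  nra.
Qed.

Lemma F_lbB I u alpha : 0 <= u -> (forall k, alpha <= x k u) ->
  - ((N%:R - 1) / N%:R * (x I u - alpha)) <= F I u.
Proof.
move=> u0 ha; rewrite /consensus_rhs.
have Np : 0 < N%:R :> R by rewrite ltr0n Npos.
set y := x I u - alpha.
have y0 : 0 <= y by have := ha I; rewrite /y; lra.
have hs : \sum_(k < N) (- y) + y <= \sum_(k < N) M I k u * (x k u - x I u).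
  rewrite [X in X + _](bigD1 I) //= [X in _ <= X](bigD1 I) //= subrr mulr0 add0r.
  rewrite addrAC addNr add0r.
  apply: ler_sum => k _; apply: Mlem => //; first exact: hMrange.
  by have := ha k; rewrite /y; lra.
move: hs; rewrite sumr_const card_ord => hs.
have -> : - ((N%:R - 1) / N%:R * y) = N%:R^-1 * ((- y) *+ N + y).
  rewrite -mulr_natl; field; exact: lt0r_neq0.
by rewrite ler_pM2l // invr_gt0.
Qed.
Lemma partB alpha xbar (hx0 : forall i, alpha <= x i 0) (hxbar : alpha <= xbar)
  I tau (tau0 : 0 <= tau) (hI : PsiL N xbar alpha tau <= x I tau) :
  forall t, tau <= t -> PsiL N xbar alpha t <= x I t.
Proof.
have hA := @partA alpha hx0.
set c := (N%:R - 1) / N%:R : R.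
have c0 : 0 <= c := @c_ge0 N hN.
suff H : forall e, 0 < e -> forall t, tau <= t -> PsiL N xbar alpha t - e * (1 + t) < x I t.
  move=> t tt; rewrite leNgt; apply/negP => xa.
  have t1 : 0 < 1 + t by lra.
  have e0 : 0 < (PsiL N xbar alpha t - x I t) / (1 + t) by rewrite divr_gt0 //; lra.
  have := H _ e0 t tt; rewrite divfK ?lt0r_neq0 //; lra.
move=> e e0.
apply: (@real_ind tau (fun t => PsiL N xbar alpha t - e * (1 + t) < x I t)).
- have : 0 < e * (1 + tau) by rewrite mulr_gt0 //; lra.
  lra.
- move=> t tt Pt; have t0 : 0 <= t by lra.
  have [L [L0 hL]] := @Lip (t + 1) ltac:(lra).
  pose g := x I t - (PsiL N xbar alpha t - e * (1 + t)).
  have g0 : 0 < g by rewrite /g; lra.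
  pose d := Num.min 1 (g / (2 * (L + 1))).
  have d1 : d <= 1 by rewrite ge_min lexx.
  have d2 : d <= g / (2 * (L + 1)) by rewrite ge_min lexx orbT.
  have d0 : 0 < d by rewrite lt_min ltr01 divr_gt0 //; lra.
  exists d => // u /andP[tu ud].
  have [_ h2] := hL I t u t0 tu ltac:(lra).
  have hP := @Psi_dec N hN xbar alpha hxbar _ _ tu.
  have k1 : (u - t) * (2 * (L + 1)) <= g.
    by rewrite -ler_pdivlMr; [lra|lra].
  have : L * (u - t) <= g / 2 by nra.
  have : 0 <= e * (u - t) by rewrite mulr_ge0 //; lra.
  rewrite /g in k1 *; lra.
- move=> t tt Pb; rewrite ltNge; apply/negP => hj.
  have t0 : 0 <= t by lra.
  have [L [L0 hL]] := @Lip t t0.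
  have cL0 : 0 <= c * L by rewrite mulr_ge0.
  pose h := e / (c * L + 1).
  have h0 : 0 < h by rewrite divr_gt0 //; lra.
  have hh : h * (c * L + 1) = e by rewrite divfK // lt0r_neq0 //; lra.
  pose s := Num.max tau (t - h).
  have stau : tau <= s by rewrite le_max lexx.
  have st : s < t by rewrite gt_max tt /=; lra.
  have ts : t - h <= s by rewrite le_max lexx orbT.
  have s0 : 0 <= s by lra.
  have Ps := Pb s ltac:(by rewrite stau st).
  have [it rt] := @Ldiff I s t ltac:(by rewrite s0 ltW).
  have lb := @int_lb (F I) s t (- (c * (x I t - alpha + L * (t - s)))) (ltW st) it.
  have hlb : forall u, s < u <= t -> - (c * (x I t - alpha + L * (t - s))) <= F I u.
    move=> u /andP[su ut].
    have u0 : 0 <= u by lra.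
    have := @F_lbB I u alpha u0 (fun k => hA k u u0).
    have [_ h2] := hL I u t u0 ut (lexx t).
    have : L * (t - u) <= L * (t - s) by rewrite ler_wpM2l //; lra.
    move=> h3 h4.
    have : c * (x I u - alpha) <= c * (x I t - alpha + L * (t - s)).
      by rewrite ler_wpM2l //; lra.
    rewrite -/c in h4; lra.
  have := lb hlb; rewrite -rt => lb2.
  have key := @Psi_key N xbar alpha hxbar _ _ (ltW st).
  rewrite -/c in key.
  have kp : 0 < t - s by lra.
  have hjm : (1 + c * (t - s)) * (x I t - alpha) <=
             (1 + c * (t - s)) * (PsiL N xbar alpha t - e * (1 + t) - alpha).
    by rewrite ler_wpM2l //; [rewrite addr_ge0 // mulr_ge0 //; lra | lra].
  have q1 : c * L * (t - s) * (t - s) <= c * L * h * (t - s).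
    by rewrite ler_wpM2r //; [lra | rewrite ler_wpM2l //; lra].
  have q2 : c * L * h * (t - s) = e * (t - s) - h * (t - s).
    by rewrite -hh; ring.
  have q3 : 0 < h * (t - s) by rewrite mulr_gt0.
  have q4 : 0 <= c * (t - s) * e * (1 + t).
    by apply: mulr_ge0; [apply: mulr_ge0; [apply: mulr_ge0 => //; lra | lra] | lra].
  nra.
Qed.
End Sys.

End S.

Theorem proposition4 (R : realType) (N : nat) (hN : (2 <= N)%N)
  (M : 'I_N -> 'I_N -> R -> R) (x : 'I_N -> R -> R) (alpha xbar T : R)
  (hMmeas : forall i j : 'I_N, lebesgue_measurable_fun `[(0:R), +oo[ (M i j))
  (hMrange : forall (i j : 'I_N) (t : R), 0 <= t -> 0 <= M i j t <= 1)
  (hsol : caratheodory_solution M x)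
  (hx0 : forall i : 'I_N, alpha <= x i 0)
  (hxbar : alpha <= xbar)
  (hT : 0 < T)
  (I : 'I_N) (tau : R) (htau : 0 <= tau <= T)
  (hI : PsiL N xbar alpha tau <= x I tau) :
  forall t : R, tau <= t -> PsiL N xbar alpha t <= x I t.
Proof.
have /andP[tau0 _] := htau.
exact: (@partB R N hN M x hMrange hsol alpha xbar hx0 hxbar I tau tau0 hI).
Qed.
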